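(* Let $G$ be an $r$-regular graph and let $0\leq\alpha\leq 1$. (i) Suppose $G$ contains $t$ pairwise vertex-disjoint cliques. Then $S_k(A_{\alpha}(G))\geq \alpha kr+(1-\alpha)(r-k+1)$ for $1\leq k \leq t+1$. (ii) Suppose $G$ contains $c$ pairwise vertex-disjoint induced cycles $C_{g_1}, C_{g_2}, \ldots, C_{g_c}$, each of even length, with lengths $g_1\geq g_2\geq \cdots \geq g_c$. Then $$S_k(A_{\alpha}(G))\geq (\alpha k+1-\alpha)r+2(1-\alpha)\sum_{i=1}^{k-1}\left(1-\frac{4}{g_{i}}\right)$$ for $1\leq k \leq c+1$.
   Context: All graphs are simple and undirected. $A_{\alpha}(G)=\alpha D(G)+(1-\alpha)A(G)$, where $A(G)$ is the adjacency matrix and $D(G)$ the diagonal degree matrix. For a real symmetric matrix $M$ with eigenvalues $\lambda_1(M)\geq\cdots\geq\lambda_n(M)$, $S_k(M)=\sum_{i=1}^k\lambda_i(M)$. A clique of $G$ is a maximal complete subgraph of $G$. $C_g$ denotes a cycle of length $g$. *)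

(* Defs.v *)
From HB Require Import structures.
From mathcomp Require Import all_boot all_order all_algebra.
Set Implicit Arguments. Unset Strict Implicit. Unset Printing Implicit Defensive.
Import Order.TTheory GRing.Theory Num.Theory.
Local Open Scope ring_scope.

Definition simple_graph n (adj : rel 'I_n) : Prop :=
  symmetric adj /\ irreflexive adj.

Definition deg n (adj : rel 'I_n) (v : 'I_n) : nat := #|[set w | adj v w]|.

Definition regular n (adj : rel 'I_n) (r : nat) : Prop :=
  forall v, deg adj v = r.

Definition adjmx (R : nzRingType) n (adj : rel 'I_n) : 'M[R]_n :=
  \matrix_(i, j) (adj i j)%:R.
Definition degmx (R : nzRingType) n (adj : rel 'I_n) : 'M[R]_n :=
  \matrix_(i, j) ((i == j)%:R * (deg adj i)%:R).
Definition A_alpha (R : nzRingType) n (adj : rel 'I_n) (a : R) : 'M[R]_n :=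
  a *: degmx R adj + (1 - a) *: adjmx R adj.

(* s is the list of eigenvalues of M, with multiplicity (roots of the
   characteristic polynomial), in non-increasing order. *)
Definition eigen_seq (R : rcfType) n (M : 'M[R]_n) (s : seq R) : Prop :=
  sorted (fun x y : R => y <= x) s /\
  char_poly M = \prod_(x <- s) ('X - x%:P).

Definition Sk (R : rcfType) (s : seq R) (k : nat) : R := \sum_(i < k) s`_i.

Definition complete_set n (adj : rel 'I_n) (K : {set 'I_n}) : Prop :=
  forall u v, u \in K -> v \in K -> u != v -> adj u v.
Definition clique n (adj : rel 'I_n) (K : {set 'I_n}) : Prop :=
  complete_set adj K /\
  forall K' : {set 'I_n}, K \subset K' -> complete_set adj K' -> K' = K.

(* f : 'I_g -> 'I_n lists the vertices of an induced cycle C_g (g >= 3):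
   f injective and f i ~ f j iff j = i +- 1 (mod g). *)
Definition induced_cycle n (adj : rel 'I_n) g (f : 'I_g -> 'I_n) : Prop :=
  (3 <= g)%N /\ injective f /\
  forall i j : 'I_g, adj (f i) (f j) =
    ((val j == (val i).+1 %% g)%N || (val i == (val j).+1 %% g)%N).

(* Main.v *)
Require Import Defs.
From HB Require Import structures.
From mathcomp Require Import all_boot all_order all_algebra.
From mathcomp Require Import complex.
From mathcomp Require Import zify ring lra.
Import Order.TTheory GRing.Theory Num.Theory.
Local Open Scope ring_scope.

Lemma pivot_ineq (R : realFieldType) n (s : seq R) (dR w : 'I_n -> R) k :
  sorted (fun x y : R => y <= x) s -> perm_eq s (map dR (enum 'I_n)) ->
  (0 < k <= n)%N -> (forall i, 0 <= w i <= 1) -> \sum_i w i = k%:R ->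
  \sum_i dR i * w i <= \sum_(i < k) s`_i.
Proof.
move=> ss pe /andP[k0 kn] w01 sw.
have sz : size s = n by rewrite (perm_size pe) size_map size_enum_ord.
set c := s`_(k.-1).
pose pos (x : R) := if 0 <= x then x else 0.
have e1 : \sum_i dR i * w i = \sum_i (dR i - c) * w i + c * k%:R.
  rewrite -sw mulr_sumr -big_split /=; apply: eq_bigr => i _; ring.
have e2 : \sum_i (dR i - c) * w i <= \sum_i pos (dR i - c).
  apply: ler_sum => i _; rewrite /pos; have /andP[w0 w1] := w01 i.
  case: (lerP 0 (dR i - c)) => h.
    by rewrite ler_piMr.
  by rewrite nmulr_rle0 // ltW.
have e3 : \sum_i pos (dR i - c) = \sum_(x <- s) pos (x - c).
  by rewrite (perm_big _ pe) /= big_map big_enum.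
have e4 : \sum_(x <- s) pos (x - c) = \sum_(0 <= i < n) pos (s`_i - c).
  by rewrite (big_nth 0) sz.
have tr : transitive (fun x y : R => y <= x) by move=> y x z h1 h2; exact: le_trans h2 h1.
have rf : reflexive (fun x y : R => y <= x) by move=> x; exact: lexx.
have hs := sorted_leq_nth tr rf 0 ss.
have e5 : \sum_(0 <= i < n) pos (s`_i - c) = \sum_(0 <= i < k) (s`_i - c).
  rewrite (big_cat_nat _ kn) //= [X in _ + X]big1_seq ?addr0.
    apply: eq_big_nat => i /andP[_ ik]; rewrite /pos ifT // subr_ge0.
    apply: hs; rewrite ?inE ?sz; lia.
  move=> i /andP[_]; rewrite mem_index_iota => /andP[ki iN].
  rewrite /pos; case: ifP => // h; apply/eqP; rewrite eq_le h andbT subr_le0 /=.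
  apply: hs; rewrite ?inE ?sz; lia.
rewrite e1; apply: le_trans (lerD (e2) (lexx _)) _.
rewrite e3 e4 e5 big_mkord sumrB sumr_const card_ord -mulr_natl mulrC; lra.
Qed.
Arguments pivot_ineq {R n s dR w k}.

Lemma char_poly_conj (F : fieldType) n (P A : 'M[F]_n) : P \in unitmx ->
  char_poly (invmx P *m A *m P) = char_poly A.
Proof.
move=> Pu.
have e : char_poly_mx (invmx P *m A *m P) =
   map_mx polyC (invmx P) *m char_poly_mx A *m map_mx polyC P.
  rewrite /char_poly_mx !map_mxM mulmxBr mulmxBl; congr (_ - _).
  by rewrite mul_mx_scalar -scalemxAl -mul_scalar_mx -!map_mxM mulVmx // map_mx1 mulmx1.
rewrite /char_poly e !det_mulmx !det_map_mx mulrC mulrA -rmorphM.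
by rewrite -det_mulmx mulmxV // det1 rmorph1 mul1r.
Qed.

Lemma char_poly_diag (F : fieldType) n (d : 'rV[F]_n) :
  char_poly (diag_mx d) = \prod_(i < n) ('X - (d 0 i)%:P).
Proof.
rewrite char_poly_trig ?diag_mx_is_trig //; apply: eq_bigr => i _.
by rewrite mxE eqxx mulr1n.
Qed.

Section Core.
Variable R : rcfType.
Local Notation rc := (real_complex R).
Local Notation C := (R[i]).

Definition nsq (z : C) : R := (complex.Re z) ^+ 2 + (complex.Im z) ^+ 2.

Lemma conj_rc (x : R) : (rc x)^* = rc x.
Proof. by apply/eqP; rewrite eq_complex /= oppr0 !eqxx. Qed.

Lemma conj_mul_nsq (z : C) : z^* * z = rc (nsq z).
Proof.
case: z => a b; apply/eqP; rewrite eq_complex /nsq /=.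
apply/andP; split; apply/eqP; ring.
Qed.

Lemma mul_conj_nsq (z : C) : z * z^* = rc (nsq z).
Proof. by rewrite mulrC conj_mul_nsq. Qed.

Lemma nsq_ge0 z : 0 <= nsq z.
Proof. by rewrite /nsq addr_ge0 // sqr_ge0. Qed.

End Core.
Arguments nsq {R}.
Arguments conj_rc {R}.
Arguments conj_mul_nsq {R}.
Arguments mul_conj_nsq {R}.
Arguments nsq_ge0 {R}.

Section Core2.
Variable R : rcfType.
Local Notation rc := (real_complex R).
Local Notation C := (R[i]).

Lemma core_kyfan n k (M : 'M[R]_n) (s : seq R) (X : 'M[R]_(k,n)) :
  M^T = M -> eigen_seq M s -> (0 < k <= n)%N -> X *m X^T = 1%:M ->
  \tr (X *m M *m X^T) <= Sk s k.
Proof.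
move=> Msym [ss cp] kk XX.
set Mc := map_mx rc M.
have Mcc : map_mx Num.conj (Mc^T) = Mc.
  by apply/matrixP => i j; rewrite !mxE -{2}Msym mxE conj_rc.
have Mn : Mc \is normalmx by rewrite qualifE /= Mcc.
set P := spectralmx Mc; set d := spectral_diag Mc.
have McE : Mc = invmx P *m diag_mx d *m P by apply/orthomx_spectralP.
have Pu : P \in unitmx := spectral_unit Mc.
have Pinv : invmx P = map_mx Num.conj (P^T) := invmx_unitary (spectral_unitarymx Mc).
have cpe : \prod_(x <- map rc s) ('X - x%:P) =
           \prod_(x <- map (fun i => d 0 i) (enum 'I_n)) ('X - x%:P).
  rewrite big_map big_map big_enum /= -char_poly_diag -(@char_poly_conj _ _ P _ Pu) -McE.
  rewrite /Mc -map_char_poly cp rmorph_prod; apply: eq_bigr => x _.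
  by rewrite /= map_polyXsubC.
have pe := prod_XsubC_eq cpe.
have dreal : forall i, d 0 i = rc (complex.Re (d 0 i)).
  move=> i; have : d 0 i \in map rc s.
    by rewrite (perm_mem pe); apply: map_f; rewrite mem_enum.
  by case/mapP => x _ ->.
pose dR i := complex.Re (d 0 i).
have peR : perm_eq s (map dR (enum 'I_n)).
  apply: (perm_map_inj (@complexI R)); rewrite -map_comp.
  by rewrite (eq_map (g := fun i => d 0 i)) // => i /=; rewrite -dreal.
set Pt := invmx P.
have PtP : Pt *m P = 1%:M by rewrite mulVmx.
have PPt : P *m Pt = 1%:M by rewrite mulmxV.
set Xc := map_mx rc X.
set XTc := map_mx rc X^T.
set Y := Xc *m Pt.
set Ys := P *m XTc.
have YYs : Y *m Ys = 1%:M.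
  rewrite /Y /Ys mulmxA -(mulmxA Xc) PtP mulmx1 /Xc /XTc -map_mxM XX.
  by rewrite map_mx1.
have YsE : forall l j, Ys l j = (Y j l)^*.
  move=> l j; rewrite !mxE rmorph_sum; apply: eq_bigr => m _.
  by rewrite /Pt Pinv !mxE rmorphM /= conjCK conj_rc mulrC.
pose wR l := \sum_j nsq (Y j l).
have trE : rc (\tr (X *m M *m X^T)) = rc (\sum_l dR l * wR l).
  rewrite -trace_map_mx !map_mxM -/Mc McE -/Pt -/Xc -/XTc.
  have -> : Xc *m (Pt *m diag_mx d *m P) *m XTc = Y *m diag_mx d *m Ys.
    by rewrite /Y /Ys !mulmxA.
  rewrite /mxtrace rmorph_sum /=.
  under eq_bigr do rewrite mxE.
  under eq_bigr do under eq_bigr do rewrite mul_mx_diag.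
  rewrite exchange_big /=; apply: eq_bigr => l _.
  rewrite rmorphM rmorph_sum /= -dreal mulr_sumr; apply: eq_bigr => j _.
  by rewrite YsE mxE mulrAC mul_conj_nsq mulrC.
set Q := Ys *m Y.
have QllE : forall l, Q l l = rc (wR l).
  move=> l; rewrite mxE rmorph_sum; apply: eq_bigr => j _.
  by rewrite YsE conj_mul_nsq.
have sumw : \sum_l wR l = k%:R.
  apply: (@complexI R); rewrite rmorph_sum rmorph_nat /=.
  under eq_bigr do rewrite -QllE.
  by rewrite -/(\tr Q) /Q mxtrace_mulC YYs mxtrace1.
have QQ : Q *m Q = Q by rewrite /Q mulmxA -(mulmxA Ys) YYs mulmx1.
have Qh : forall l m, Q m l = (Q l m)^*.
  move=> l m; rewrite !mxE rmorph_sum; apply: eq_bigr => j _.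
  by rewrite !YsE rmorphM /= conjCK mulrC.
have w01 : forall l, 0 <= wR l <= 1.
  move=> l; have w0 : 0 <= wR l by apply: sumr_ge0 => j _; exact: nsq_ge0.
  have e : wR l = \sum_m nsq (Q l m).
    apply: (@complexI R); rewrite -QllE -{1}QQ mxE rmorph_sum.
    by apply: eq_bigr => m _; rewrite (Qh l m) mul_conj_nsq.
  have : nsq (Q l l) <= wR l.
    rewrite e (bigD1 l) //= lerDl; apply: sumr_ge0 => m _; exact: nsq_ge0.
  rewrite QllE /nsq /= expr0n /= addr0 => h.
  rewrite w0 /=; nra.
have := pivot_ineq ss peR kk w01 sumw.
have -> : \sum_l dR l * wR l = \tr (X *m M *m X^T) by apply: (@complexI R); rewrite trE.
by [].
Qed.
End Core2.
Arguments core_kyfan {R n k M s X}.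

Lemma kyfan_family (R : rcfType) n k (M : 'M[R]_n) (s : seq R)
    (f : 'I_k -> 'I_n -> R) :
  M^T = M -> eigen_seq M s -> (0 < k <= n)%N ->
  (forall j j', j != j' -> \sum_u f j u * f j' u = 0) ->
  (forall j, 0 < \sum_u f j u ^+ 2) ->
  \sum_j (\sum_u \sum_v f j u * M u v * f j v) / (\sum_u f j u ^+ 2) <= Sk s k.
Proof.
move=> Msym es kk orth pos.
pose nu j := \sum_u f j u ^+ 2.
pose X := \matrix_(j, u) (f j u / Num.sqrt (nu j)).
have sq : forall j, Num.sqrt (nu j) * Num.sqrt (nu j) = nu j.
  by move=> j; rewrite -expr2 sqr_sqrtr // (ltW (pos j)).
have sq0 : forall j, Num.sqrt (nu j) != 0.
  by move=> j; rewrite sqrtr_eq0 -ltNge pos.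
have XX : X *m X^T = 1%:M.
  apply/matrixP => j j'; rewrite !mxE.
  have -> : \sum_u X j u * X^T u j' =
            (\sum_u f j u * f j' u) / (Num.sqrt (nu j) * Num.sqrt (nu j')).
    rewrite mulr_suml; apply: eq_bigr => u _; rewrite !mxE.
    by field; rewrite !sq0.
  case: eqP => [<-|/eqP ne]; last by rewrite (orth _ _ ne) mul0r.

  rewrite sq /nu.
  under eq_bigr do rewrite -expr2.
  by rewrite divff // gt_eqF // pos.
have := core_kyfan Msym es kk XX.
suff -> : \tr (X *m M *m X^T) =
  \sum_j (\sum_u \sum_v f j u * M u v * f j v) / (\sum_u f j u ^+ 2) by [].
rewrite /mxtrace; apply: eq_bigr => j _.
rewrite mxE; under eq_bigr do rewrite mxE mulr_suml.
rewrite exchange_big /= mulr_suml; apply: eq_bigr => u _; rewrite mulr_suml; apply: eq_bigr => v _.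
rewrite !mxE -/(nu j); apply/eqP; rewrite -subr_eq0; apply/eqP.
have t0 := sq0 j; have tt := sq j.
move: t0 tt; set t := Num.sqrt (nu j) => t0 tt.
rewrite -tt; field; exact: t0.
Qed.
Arguments kyfan_family {R n k M s f}.

Section Vec.
Variable R : rcfType.
Variable n : nat.

Definition dvec {m} (phi : 'I_m -> 'I_n) (c : 'I_m -> R) : 'I_n -> R :=
  fun u => \sum_y (u == phi y)%:R * c y.

Lemma sum_delta (a : 'I_n) (G : 'I_n -> R) : \sum_u (u == a)%:R * G u = G a.
Proof.
rewrite (bigD1 a) //= eqxx mul1r big1 ?addr0 // => u /negbTE ->; by rewrite mul0r.
Qed.

Lemma dvec_dot m (phi : 'I_m -> 'I_n) (c : 'I_m -> R) (z : 'I_n -> R) :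
  \sum_u dvec phi c u * z u = \sum_y c y * z (phi y).
Proof.
rewrite /dvec; under eq_bigr do rewrite mulr_suml.
rewrite exchange_big /=; apply: eq_bigr => y _.
rewrite -(sum_delta (phi y) (fun u => c y * z u)); apply: eq_bigr => u _.
by rewrite mulrA.
Qed.

Lemma dvec_at m (phi : 'I_m -> 'I_n) (c : 'I_m -> R) y : injective phi -> dvec phi c (phi y) = c y.
Proof.
move=> inj; rewrite /dvec (bigD1 y) //= eqxx mul1r big1 ?addr0 //.
by move=> y' ne; rewrite (inj_eq inj) eq_sym (negbTE ne) mul0r.
Qed.

Lemma dvec_norm m (phi : 'I_m -> 'I_n) (c : 'I_m -> R) : injective phi ->
  \sum_u dvec phi c u ^+ 2 = \sum_y c y ^+ 2.
Proof.
move=> inj; under eq_bigr do rewrite expr2.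
by rewrite dvec_dot; apply: eq_bigr => y _; rewrite dvec_at // expr2.
Qed.

Lemma dvec_orth m m' (phi : 'I_m -> 'I_n) (c : 'I_m -> R) (phi' : 'I_m' -> 'I_n) (c' : 'I_m' -> R) :
  (forall y y', phi y != phi' y') ->
  \sum_u dvec phi c u * dvec phi' c' u = 0.
Proof.
move=> disj; rewrite dvec_dot big1 // => y _.
rewrite /dvec big1 ?mulr0 // => y' _; by rewrite (negbTE (disj y y')) mul0r.
Qed.

Lemma dvec_sum m (phi : 'I_m -> 'I_n) (c : 'I_m -> R) : \sum_u dvec phi c u = \sum_y c y.
Proof.
under eq_bigr do rewrite -[dvec _ _ _]mulr1.
by rewrite dvec_dot; under eq_bigr do rewrite mulr1.
Qed.

Lemma dvec_form m (phi : 'I_m -> 'I_n) (c : 'I_m -> R) (A : 'I_n -> 'I_n -> R) :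
  \sum_u \sum_v A u v * dvec phi c u * dvec phi c v =
  \sum_y \sum_y' A (phi y) (phi y') * c y * c y'.
Proof.
have e : forall u, \sum_v A u v * dvec phi c u * dvec phi c v =
   dvec phi c u * (\sum_v A u v * dvec phi c v).
  by move=> u; rewrite mulr_sumr; apply: eq_bigr => v _; rewrite mulrCA mulrA.
under eq_bigr do rewrite e.
rewrite dvec_dot; apply: eq_bigr => y _.
have e2 : forall v, A (phi y) v * dvec phi c v = dvec phi c v * A (phi y) v.
  by move=> v; rewrite mulrC.
under eq_bigr do rewrite e2.
rewrite dvec_dot mulr_sumr; apply: eq_bigr => y' _.
by ring.
Qed.
End Vec.
Arguments dvec {R n m}.

Section Cyc.
Variable R : rcfType.

Definition sgn (h m : nat) : R := if (m < h)%N then 1 else -1.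

Lemma sgn_sum h : \sum_(0 <= m < h.*2) sgn h m = 0.
Proof.
rewrite (big_cat_nat _ (n:=h)) //=; last by rewrite -addnn leq_addr.
rewrite (eq_big_nat _ _ (F2 := fun _ => 1)); last by move=> m /andP[_ mh]; rewrite /sgn mh.
rewrite [X in _ + X](eq_big_nat _ _ (F2 := fun _ => -1)); last first.
  by move=> m /andP[hm _]; rewrite /sgn ltnNge hm.
rewrite !sumr_const_nat -addnn addnK subn0; by rewrite -mulrnDl addrN mul0rn.
Qed.

Lemma sgn_sq h m : sgn h m ^+ 2 = 1.
Proof. by rewrite /sgn; case: ifP => _; rewrite ?expr1n ?sqrrN ?expr1n. Qed.

Lemma sum_nat1 (F : nat -> R) m n : n = m.+1 -> \sum_(m <= i < n) F i = F m.
Proof. by move=> ->; rewrite big_nat1. Qed.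

Lemma sgn_cyc h : (2 <= h)%N ->
  \sum_(0 <= m < h.*2) sgn h m * sgn h (m.+1 %% h.*2) = (h.*2)%:R - 4.
Proof.
move=> h2.
have e1 : (0 <= h.-1)%N by [].
rewrite (big_cat_nat _ (n:=h.-1)) //=; last by rewrite -addnn; lia.
rewrite (big_cat_nat _ (m:=h.-1) (n:=h)) //=; last by rewrite -addnn; lia.
rewrite (big_cat_nat _ (m:=h) (n:=h.*2.-1)) //=; last by rewrite -addnn; lia.
rewrite (sum_nat1 _ h.-1 h); last by lia.
rewrite (sum_nat1 _ h.*2.-1 h.*2); last by rewrite -addnn; lia.
rewrite (eq_big_nat _ _ (F2 := fun _ => 1)); last first.
  move=> m /andP[_ mh]; rewrite /sgn modn_small; last by rewrite -addnn; lia.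
  by rewrite ifT ?ifT ?mulr1 //; lia.
rewrite [X in _ + (_ + (X + _))](eq_big_nat _ _ (F2 := fun _ => 1)); last first.
  move=> m /andP[hm mh]; rewrite /sgn modn_small; last by rewrite -addnn in mh *; lia.
  by rewrite ifF ?ifF ?mulrNN ?mulr1 //; apply/negbTE; rewrite -leqNgt; lia.
rewrite !sumr_const_nat.
have -> : (h.-1.+1 %% h.*2 = h)%N by rewrite prednK ?modn_small; rewrite -?addnn; lia.
have -> : (h.*2.-1.+1 %% h.*2 = 0)%N by rewrite prednK ?modnn; rewrite -?addnn; lia.
rewrite /sgn ltnn ifT; last by lia.
rewrite ifF; last by apply/negbTE; rewrite -leqNgt -addnn; lia.
rewrite ifT; last by lia.
have -> : (h.-1 - 0 = h - 1)%N by lia.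
have -> : (h.*2.-1 - h = h - 1)%N by rewrite -addnn; lia.
rewrite natrB; last by rewrite -?addnn; lia.
rewrite ?natrB; try lia. rewrite -addnn natrD. lra.
all: rewrite -?addnn; lia.
Qed.
End Cyc.
Arguments sgn {R}.

Section Cyc2.
Variable R : rcfType.

Lemma sum_delta_ord g (m : 'I_g) (F : 'I_g -> R) :
  \sum_y ((y : 'I_g) == m)%:R * F y = F m.
Proof.
rewrite (bigD1 m) //= eqxx mul1r big1 ?addr0 // => u /negbTE ->; by rewrite mul0r.
Qed.

Lemma modS x g : (x < g)%N -> (x.+1 %% g = if (x.+1 < g)%N then x.+1 else 0)%N.
Proof.
move=> xg; case: ltnP => h; first by rewrite modn_small.
have -> : x.+1 = g by apply/eqP; rewrite eqn_leq xg h.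
by rewrite modnn.
Qed.

Lemma cycle_form g (A : 'I_g -> 'I_g -> bool) : (3 <= g)%N -> ~~ odd g ->
  (forall y y' : 'I_g, A y y' = (val y' == (val y).+1 %% g)%N || (val y == (val y').+1 %% g)%N) ->
  \sum_y \sum_y' (A y y')%:R * sgn (g./2) y * (sgn (g./2) y' : R) = 2 * (g%:R - 4).
Proof.
move=> g3 ev hA.
have gp : (0 < g)%N by lia.
pose sc (y : 'I_g) : 'I_g := Ordinal (ltn_pmod (val y).+1 gp).
set h := g./2.
have gh : g = h.*2 by rewrite -[LHS](odd_double_half g) (negbTE ev).
have e1 : forall y y' : 'I_g, (A y y')%:R = ((y' == sc y)%:R + (y == sc y')%:R :> R).
  move=> y y'; rewrite hA.
  have -> : (y' == sc y) = (val y' == (val y).+1 %% g)%N by [].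
  have -> : (y == sc y') = (val y == (val y').+1 %% g)%N by [].
  case: eqP => [e|_]; case: eqP => [e'|_] //=; rewrite ?add0r ?addr0 //.
  exfalso; have gh2 : g = (2 * h)%N by rewrite gh mul2n.
  change (nat_of_ord y' = (nat_of_ord y).+1 %% g)%N in e.
  change (nat_of_ord y = (nat_of_ord y').+1 %% g)%N in e'.
  move: e e'; rewrite (@modS y g (ltn_ord y)) (@modS y' g (ltn_ord y')).
  have := ltn_ord y; have := ltn_ord y'.
  case: ifP => h1; case: ifP => h2; lia.
have e2 : forall y, \sum_y' (A y y')%:R * sgn h y * (sgn h y' : R) =
    sgn h y * sgn h (sc y) + \sum_y' (y == sc y')%:R * (sgn h y * sgn h y').
  move=> y; under eq_bigr do rewrite e1 mulrDl mulrDl.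
  rewrite big_split /=; congr (_ + _).
    rewrite -(@sum_delta_ord _ (sc y) (fun y' => sgn h y * (sgn h y' : R))).
    by apply: eq_bigr => y' _; rewrite mulrA.
  by apply: eq_bigr => y' _; rewrite mulrA.
under eq_bigr do rewrite e2.
rewrite big_split /= exchange_big /=.
have e3 : forall y', \sum_y (y == sc y')%:R * (sgn h y * (sgn h y' : R)) = sgn h y' * sgn h (sc y').
  move=> y'; rewrite (@sum_delta_ord _ (sc y') (fun y => sgn h y * (sgn h y' : R))); exact: mulrC.
under [X in _ + X]eq_bigr do rewrite e3.
have S : \sum_(y < g) sgn h y * (sgn h (sc y) : R) = g%:R - 4.
  rewrite /sc /=.
  rewrite -(big_mkord xpredT (fun m => sgn h m * (sgn h (m.+1 %% g) : R))).
  rewrite gh; apply: sgn_cyc; lia.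
rewrite S; ring.
Qed.
End Cyc2.

Section Graph.
Variable R : rcfType.
Variable n : nat.
Variable adj : rel 'I_n.
Variable r : nat.
Variable a : R.
Hypothesis sg : simple_graph adj.
Hypothesis reg : regular adj r.

Lemma A_sym : (A_alpha adj a)^T = A_alpha adj a.
Proof.
case: sg => asym _; apply/matrixP => u v; rewrite !mxE asym eq_sym.
by case: eqP => [->|]; rewrite ?mul0r.
Qed.

Lemma A_E u v : A_alpha adj a u v = a * (u == v)%:R * r%:R + (1 - a) * (adj u v)%:R.
Proof. by rewrite !mxE reg mulrA. Qed.

Lemma deg_sum u : \sum_v ((adj u v)%:R : R) = r%:R.
Proof.
rewrite -(reg u) /deg -natr_sum; congr (_%:R).
rewrite -sum1_card [RHS]big_mkcond /=; apply: eq_bigr => v _.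
by rewrite inE; case: (adj u v).
Qed.

Lemma qf_split (x : 'I_n -> R) :
  \sum_u \sum_v x u * A_alpha adj a u v * x v =
  a * r%:R * \sum_u x u ^+ 2 + (1 - a) * \sum_u \sum_v (adj u v)%:R * x u * x v.
Proof.
rewrite mulr_sumr mulr_sumr -big_split /=; apply: eq_bigr => u _.
rewrite mulr_sumr.
have e : forall v, x u * A_alpha adj a u v * x v =
   (v == u)%:R * (a * r%:R * x u * x v) + (1 - a) * ((adj u v)%:R * x u * x v).
  move=> v; rewrite A_E eq_sym; ring.
under eq_bigr do rewrite e.
rewrite big_split /= sum_delta expr2; congr (_ + _); ring.
Qed.
End Graph.
Arguments A_sym {R n adj} a.
Arguments A_E {R n adj r} a.
Arguments deg_sum R {n adj r}.
Arguments qf_split {R n adj r} a.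

Lemma clique_pair n (adj : rel 'I_n) r (K : {set 'I_n}) :
  simple_graph adj -> regular adj r -> (0 < r)%N -> (0 < n)%N -> clique adj K ->
  exists p : 'I_n * 'I_n, [&& p.1 \in K, p.2 \in K & p.1 != p.2].
Proof.
move=> [asym airr] reg rpos n0 [Kc Kmax].
have [u uK] : exists u, u \in K.
  apply/set0Pn; apply/negP => /eqP K0.
  pose w := Ordinal n0.
  have : [set w] = K.
    apply: Kmax; first by rewrite K0 sub0set.
    by move=> x y; rewrite !inE => /eqP-> /eqP->; rewrite eqxx.
  by rewrite K0 => /setP /(_ w); rewrite !inE eqxx.
have [w uw] : exists w, adj u w.
  have : (0 < deg adj u)%N by rewrite reg.
  by rewrite /deg => /card_gt0P [w]; rewrite inE; exists w.
case: (boolP [exists v in K, v != u]) => [/existsP [v /andP[vK vu]] | /existsPn hn].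
  by exists (u, v); rewrite /= uK vK eq_sym vu.
exfalso.
have : [set u; w] = K.
  apply: Kmax.
    apply/subsetP => x xK; rewrite !inE; have := hn x; rewrite xK /= negbK => ->; done.
  move=> x y; rewrite !inE => /orP[] /eqP-> /orP[] /eqP->; rewrite ?eqxx // => _.
  by rewrite asym.
move=> /setP /(_ w); rewrite !inE eqxx orbT => /esym wK.
have := hn w; rewrite wK /= => /negPn /eqP wu.
by move: uw; rewrite -wu airr.
Qed.

Lemma part1 (R : rcfType) (n : nat) (adj : rel 'I_n) (r : nat) (a : R) :
  simple_graph adj -> regular adj r -> 0 <= a <= 1 ->
  forall (t : nat) (K : 'I_t -> {set 'I_n}),
     (forall i, clique adj (K i)) ->
     (forall i j, i != j -> [disjoint K i & K j]) ->
     forall (k : nat) (s : seq R), (1 <= k <= t.+1)%N -> (k <= n)%N ->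
       eigen_seq (A_alpha adj a) s ->
       a * k%:R * r%:R + (1 - a) * (r%:R - k%:R + 1) <= Sk s k.
Proof.
move=> sg reg /andP[a0 a1] t K Kcl Kdis [|k] s // /andP[_ kt] kn es.
have kk : (0 < k.+1 <= n)%N by rewrite kn.
have Msym := A_sym a sg.
have n0 : (0 < n)%N by lia.
have [asym airr] := sg.
case: (posnP r) => [r0 | rpos].
  pose f (j : 'I_k.+1) := dvec (fun _ : 'I_1 => widen_ord kn j) (fun _ => 1 : R).
  have inj1 : forall j, injective (fun _ : 'I_1 => widen_ord kn j).
    by move=> j y y' _; rewrite (ord1 y) (ord1 y').
  have orth : forall j j', j != j' -> \sum_u f j u * f j' u = 0.
    move=> j j' ne; apply: dvec_orth => y y'.
    by apply: contra ne => /eqP /(congr1 val) /= /val_inj ->.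
  have pos : forall j, 0 < \sum_u f j u ^+ 2.
    by move=> j; rewrite dvec_norm // big_ord1 expr1n ltr01.
  have := kyfan_family Msym es kk orth pos.
  have -> : \sum_j (\sum_u \sum_v f j u * A_alpha adj a u v * f j v) / (\sum_u f j u ^+ 2) = 0.
    apply: big1 => j _; rewrite (qf_split a reg) dvec_form big_ord1 big_ord1 airr r0.
    by rewrite /= !(mulr0, mul0r, addr0, add0r, mulr0n).
  rewrite r0 => h; apply: le_trans h; rewrite mulr0 add0r.
  have : (0 : R) <= k%:R by rewrite ler0n.
  rewrite -natr1; nra.
have ex : forall i : 'I_t, exists p : 'I_n * 'I_n, [&& p.1 \in K i, p.2 \in K i & p.1 != p.2].
  by move=> i; exact: (clique_pair _ _ _ _ sg reg rpos n0 (Kcl i)).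
have [p hp] := fin_all_exists ex.
have kt' : (k <= t)%N by [].
pose phi (i : 'I_t) (y : 'I_2) := if y == ord0 then (p i).1 else (p i).2.
pose cc (y : 'I_2) : R := if y == ord0 then 1 else -1.
have phiK : forall i y, phi i y \in K i.
  by move=> i y; rewrite /phi; case: ifP => _; have /and3P[] := hp i.
have I2 : forall y : 'I_2, y = ord0 \/ y = lift ord0 ord0.
  by case=> [[|[|m]] hm] //; [left|right]; apply: val_inj.
have phiinj : forall i, injective (phi i).
  { move=> i y y'; have /and3P[_ _ ne] := hp i.
  case: (I2 y) => ->; case: (I2 y') => -> //; rewrite /phi /=.
  all: by move=> e; move: ne; rewrite e eqxx. }
have wi : injective (widen_ord kt') by move=> x y /(congr1 val) /= /val_inj.
pose f (j : 'I_k.+1) : 'I_n -> R :=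
  match unlift ord0 j with None => fun _ => 1 | Some j' => dvec (phi (widen_ord kt' j')) cc end.
have f0 : f ord0 = fun _ => 1 by rewrite /f unlift_none.
have fS : forall j', f (lift ord0 j') = dvec (phi (widen_ord kt' j')) cc by move=> j'; rewrite /f liftK.
have ccsum : \sum_y cc y = 0 by rewrite !big_ord_recl big_ord0 /cc /= addr0 addrN.
have orth : forall j j', j != j' -> \sum_u f j u * f j' u = 0.
  move=> j j' ne.
  case: (unliftP ord0 j) ne => [j1 -> | ->]; case: (unliftP ord0 j') => [j1' -> | ->] //.
  - rewrite (inj_eq lift_inj) => ne; rewrite !fS; apply: dvec_orth => y y'.
    have ne2 : widen_ord kt' j1 != widen_ord kt' j1' by rewrite (inj_eq wi).
    apply/eqP => e; have h1 := phiK (widen_ord kt' j1) y.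
    have h2 := phiK (widen_ord kt' j1') y'; rewrite e in h1.
    by rewrite (disjointFr (Kdis _ _ ne2) h1) in h2.
  - move=> _; rewrite fS f0; under eq_bigr do rewrite mulr1.
    by rewrite dvec_sum.
  - move=> _; rewrite fS f0; under eq_bigr do rewrite mul1r.
    by rewrite dvec_sum.
have pos : forall j, 0 < \sum_u f j u ^+ 2.
  move=> j; case: (unliftP ord0 j) => [j1 -> | ->].
    rewrite fS dvec_norm // !big_ord_recl big_ord0 /cc /=.
    rewrite expr1n sqrrN expr1n addr0; lra.
  by rewrite f0; under eq_bigr do rewrite expr1n; rewrite sumr_const card_ord ltr0n.
have := kyfan_family Msym es kk orth pos.
rewrite big_ord_recl.
have e0 : (\sum_u \sum_v f ord0 u * A_alpha adj a u v * f ord0 v) / (\sum_u f ord0 u ^+ 2) = r%:R.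
  rewrite f0 (qf_split a reg).
  have -> : \sum_(u < n) \sum_v ((adj u v)%:R : R) * 1 * 1 = n%:R * r%:R.
    transitivity (\sum_(u < n) (r%:R : R)); last by rewrite sumr_const card_ord mulr_natl.
    apply: eq_bigr => u _.
    by rewrite -(deg_sum R reg u); apply: eq_bigr => v _; rewrite !mulr1.
  under eq_bigr do rewrite expr1n; rewrite sumr_const card_ord.
  have nz : (n%:R : R) != 0 by rewrite pnatr_eq0 -lt0n.
  rewrite -mulr_natr; field; done.
have eS : forall j', (\sum_u \sum_v f (lift ord0 j') u * A_alpha adj a u v * f (lift ord0 j') v) /
     (\sum_u f (lift ord0 j') u ^+ 2) = a * r%:R - (1 - a).
  move=> j'; rewrite fS (qf_split a reg) dvec_form dvec_norm //.
  set i := widen_ord kt' j'.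
  have /and3P[p1K p2K pne] := hp i.
  have ad : adj (p i).1 (p i).2 by apply: (proj1 (Kcl i)).
  rewrite !big_ord_recl !big_ord0 /phi /cc /= !airr ad asym ad /=.
  by field.
rewrite e0; under eq_bigr do rewrite eS.
rewrite sumr_const card_ord => h; apply: le_trans h.
rewrite -mulr_natl -natr1; lra.
Qed.

Lemma sgn_sum_g (R : rcfType) g : ~~ odd g -> \sum_(y < g) (sgn g./2 y : R) = 0.
Proof.
move=> ev; rewrite -(big_mkord xpredT (fun m => (sgn g./2 m : R))).
set h := g./2.
have gh : g = h.*2 by rewrite -[LHS](odd_double_half g) (negbTE ev).
rewrite {1}gh; exact: sgn_sum.
Qed.

Lemma part2 (R : rcfType) (n : nat) (adj : rel 'I_n) (r : nat) (a : R) :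
  simple_graph adj -> regular adj r -> 0 <= a <= 1 ->
  forall (c : nat) (g : 'I_c -> nat) (C : forall i : 'I_c, 'I_(g i) -> 'I_n),
     (forall i, induced_cycle adj (C i)) ->
     (forall i, ~~ odd (g i)) ->
     (forall i j : 'I_c, (i <= j)%N -> (g j <= g i)%N) ->
     (forall (i j : 'I_c) (x : 'I_(g i)) (y : 'I_(g j)), i != j -> C i x != C j y) ->
     forall (k : nat) (s : seq R), (1 <= k <= c.+1)%N -> (k <= n)%N ->
       eigen_seq (A_alpha adj a) s ->
       (a * k%:R + 1 - a) * r%:R
         + 2 * (1 - a) * \sum_(i < c | (i < k.-1)%N) (1 - 4 / (g i)%:R)
       <= Sk s k.
Proof.
move=> sg reg /andP[a0 a1] c g C Cind ev _ Cdis [|k] s // /andP[_ kc] kn es.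
have kk : (0 < k.+1 <= n)%N by rewrite kn.
have Msym := A_sym a sg.
have n0 : (0 < n)%N by lia.
have kc' : (k <= c)%N by [].
pose cv (i : 'I_c) : 'I_n -> R := dvec (C i) (fun y => sgn (g i)./2 y).
have wi : injective (widen_ord kc') by move=> x y /(congr1 val) /= /val_inj.
pose f (j : 'I_k.+1) : 'I_n -> R :=
  match unlift ord0 j with None => fun _ => 1 | Some j' => cv (widen_ord kc' j') end.
have f0 : f ord0 = fun _ => 1 by rewrite /f unlift_none.
have fS : forall j', f (lift ord0 j') = cv (widen_ord kc' j') by move=> j'; rewrite /f liftK.
have g3 : forall i, (3 <= g i)%N by move=> i; case: (Cind i).
have Cinj : forall i, injective (C i) by move=> i; case: (Cind i) => _ [].
have cvsum : forall i, \sum_u cv i u = 0.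
  by move=> i; rewrite /cv dvec_sum; apply: sgn_sum_g.
have cvnorm : forall i, \sum_u cv i u ^+ 2 = (g i)%:R.
  move=> i; rewrite /cv dvec_norm //.
  under eq_bigr do rewrite sgn_sq.
  by rewrite sumr_const card_ord.
have orth : forall j j', j != j' -> \sum_u f j u * f j' u = 0.
  move=> j j' ne.
  case: (unliftP ord0 j) ne => [j1 -> | ->]; case: (unliftP ord0 j') => [j1' -> | ->] //.
  - rewrite (inj_eq lift_inj) => ne; rewrite !fS; apply: dvec_orth => y y'.
    by apply: Cdis; rewrite (inj_eq wi).
  - move=> _; rewrite fS f0; under eq_bigr do rewrite mulr1.
    by rewrite cvsum.
  - move=> _; rewrite fS f0; under eq_bigr do rewrite mul1r.
    by rewrite cvsum.
have pos : forall j, 0 < \sum_u f j u ^+ 2.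
  move=> j; case: (unliftP ord0 j) => [j1 -> | ->].
    by rewrite fS cvnorm ltr0n; apply: leq_trans (g3 _).
  by rewrite f0; under eq_bigr do rewrite expr1n; rewrite sumr_const card_ord ltr0n.
have := kyfan_family Msym es kk orth pos.
rewrite big_ord_recl.
have e0 : (\sum_u \sum_v f ord0 u * A_alpha adj a u v * f ord0 v) / (\sum_u f ord0 u ^+ 2) = r%:R.
  rewrite f0 (qf_split a reg).
  have -> : \sum_(u < n) \sum_v ((adj u v)%:R : R) * 1 * 1 = n%:R * r%:R.
    transitivity (\sum_(u < n) (r%:R : R)); last by rewrite sumr_const card_ord mulr_natl.
    apply: eq_bigr => u _.
    by rewrite -(deg_sum R reg u); apply: eq_bigr => v _; rewrite !mulr1.
  under eq_bigr do rewrite expr1n; rewrite sumr_const card_ord.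
  have nz : (n%:R : R) != 0 by rewrite pnatr_eq0 -lt0n.
  rewrite -mulr_natr; field; done.
have eS : forall j', (\sum_u \sum_v f (lift ord0 j') u * A_alpha adj a u v * f (lift ord0 j') v) /
     (\sum_u f (lift ord0 j') u ^+ 2) =
     a * r%:R + 2 * (1 - a) * (1 - 4 / (g (widen_ord kc' j'))%:R).
  move=> j'; rewrite fS (qf_split a reg) cvnorm.
  set i := widen_ord kc' j'.
  rewrite /cv dvec_form.
  have [g3i [_ hadj]] := Cind i.
  rewrite (@cycle_form R _ (fun y y' => adj (C i y) (C i y'))) //.
  have nz : ((g i)%:R : R) != 0 by rewrite pnatr_eq0 -lt0n; apply: leq_trans g3i.
  by field.
rewrite e0; under eq_bigr do rewrite eS.
rewrite big_split /= sumr_const card_ord => h; apply: le_trans h.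
rewrite /= (big_ord_narrow kc') -mulr_sumr -mulr_natl -natr1.
set S := \sum_(i < k) _; lra.
Qed.

Theorem theorem5p2 (R : rcfType) (n : nat) (adj : rel 'I_n) (r : nat) (a : R) :
  simple_graph adj -> regular adj r -> 0 <= a <= 1 ->
  (* (i) *)
  (forall (t : nat) (K : 'I_t -> {set 'I_n}),
     (forall i, clique adj (K i)) ->
     (forall i j, i != j -> [disjoint K i & K j]) ->
     forall (k : nat) (s : seq R), (1 <= k <= t.+1)%N -> (k <= n)%N ->
       eigen_seq (A_alpha adj a) s ->
       a * k%:R * r%:R + (1 - a) * (r%:R - k%:R + 1) <= Sk s k)
  /\
  (* (ii) *)
  (forall (c : nat) (g : 'I_c -> nat) (C : forall i : 'I_c, 'I_(g i) -> 'I_n),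
     (forall i, induced_cycle adj (C i)) ->
     (forall i, ~~ odd (g i)) ->
     (forall i j : 'I_c, (i <= j)%N -> (g j <= g i)%N) ->
     (forall (i j : 'I_c) (x : 'I_(g i)) (y : 'I_(g j)), i != j -> C i x != C j y) ->
     forall (k : nat) (s : seq R), (1 <= k <= c.+1)%N -> (k <= n)%N ->
       eigen_seq (A_alpha adj a) s ->
       (a * k%:R + 1 - a) * r%:R
         + 2 * (1 - a) * \sum_(i < c | (i < k.-1)%N) (1 - 4 / (g i)%:R)
       <= Sk s k).
Proof.
move=> sg reg a01; split.
  exact: part1 sg reg a01.
exact: part2 sg reg a01.
Qed.
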